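(* Let $\varphi:M\to M'$ be a homomorphism of abelian groups such that $\mathrm{Ker}\,\varphi$ is finite and $(\mathrm{Coker}\,\varphi)_{\mathrm{div}}=0$. If $M_{\mathrm{div}}$ or $M'_{\mathrm{div}}$ is uniquely divisible, then $\varphi$ induces an isomorphism $M_{\mathrm{div}}\xrightarrow{\cong}M'_{\mathrm{div}}$.
   Context: For an abelian group $A$, $A_{\mathrm{div}}$ denotes its maximal divisible subgroup. *)

(* Defs.v *)
From mathcomp Require Import all_boot all_order all_algebra.
Set Implicit Arguments. Unset Strict Implicit. Unset Printing Implicit Defensive.
Import GRing.Theory.
Local Open Scope ring_scope.

Definition is_subgroup (M : zmodType) (S : M -> Prop) : Prop :=
  S 0 /\ (forall x y, S x -> S y -> S (x - y)).

Definition divisible_in (M : zmodType) (S : M -> Prop) : Prop :=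
  forall x, S x -> forall n : nat, (0 < n)%N -> exists y, S y /\ y *+ n = x.

Definition uniquely_divisible_in (M : zmodType) (S : M -> Prop) : Prop :=
  divisible_in S /\
  forall (x y : M) (n : nat), S x -> S y -> (0 < n)%N -> x *+ n = y *+ n -> x = y.

(* A_div : the maximal divisible subgroup = union of all divisible subgroups *)
Definition div_part (M : zmodType) : M -> Prop :=
  fun x => exists S : M -> Prop, [/\ is_subgroup S, divisible_in S & S x].

Definition kernel (M M' : zmodType) (f : M -> M') : M -> Prop :=
  fun x => f x = 0.

Definition image (M M' : zmodType) (f : M -> M') : M' -> Prop :=
  fun y => exists x, f x = y.

Definition finite_set (M : zmodType) (S : M -> Prop) : Prop :=
  exists s : seq M, forall x, S x -> x \in s.

(* (Coker f)_div = 0, unfolded through the correspondence between subgroups of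
   Coker f = M' / im f and subgroups P of M' containing im f:
   P / im f is divisible iff for y in P and n > 0 there is z in P with
   z *+ n - y in im f. The condition says every such P is contained in im f,
   i.e. every divisible subgroup of Coker f is zero. *)
Definition coker_div_trivial (M M' : zmodType) (f : M -> M') : Prop :=
  forall P : M' -> Prop,
    is_subgroup P ->
    (forall y, image f y -> P y) ->
    (forall y, P y -> forall n : nat, (0 < n)%N ->
        exists z, P z /\ image f (z *+ n - y)) ->
    forall y, P y -> image f y.

(* Main.v *)
Require Import Defs.
From mathcomp Require Import all_boot all_order all_algebra.
From Stdlib Require Import Classical.
Set Implicit Arguments. Unset Strict Implicit. Unset Printing Implicit Defensive.
Import GRing.Theory.
Local Open Scope ring_scope.

Lemma ker_torsion (M M' : zmodType) (phi : {additive M -> M'}) :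
  finite_set (kernel phi) -> forall g, kernel phi g ->
  exists k, (0 < k)%N /\ g *+ k = 0.
Proof.
move=> [s Hs] g Kg.
set t := [seq g *+ i | i <- iota 0 (size s).+1].
have sub : {subset t <= s}.
  move=> x /mapP [i _ ->]; apply: Hs; rewrite /kernel raddfMn Kg mul0rn //.
have : ~~ uniq t.
  apply/negP => u; have := uniq_leq_size u sub.
  by rewrite size_map size_iota ltnn.
move/(uniqPn 0) => [i [j [lij ljt eq]]].
rewrite size_map size_iota in ljt.
rewrite !(nth_map 0%N) ?size_iota ?(ltn_trans lij) // !nth_iota ?(ltn_trans lij) //
  !add0n in eq.
exists (j - i)%N; split; first by rewrite subn_gt0.
by rewrite mulrnBr ?(ltnW lij) // eq subrr.
Qed.

Lemma ker_exponent (M M' : zmodType) (phi : {additive M -> M'}) :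
  finite_set (kernel phi) ->
  exists e, (0 < e)%N /\ forall g, kernel phi g -> g *+ e = 0.
Proof.
move=> Hf; have [s Hs] := Hf.
suff [e [e0 He]] : exists e, (0 < e)%N /\ forall g, g \in s -> kernel phi g -> g *+ e = 0.
  by exists e; split=> // g Kg; apply: He => //; apply: Hs.
elim: s {Hs} => [|a s [e [e0 He]]]; first by exists 1%N.
case: (classic (kernel phi a)) => [Ka|nKa].
  have [k [k0 Hk]] := ker_torsion Hf Ka.
  exists (e * k)%N; split; first by rewrite muln_gt0 e0.
  move=> g; rewrite inE => /orP [/eqP -> _|gs Kg].
    by rewrite mulnC mulrnA Hk mul0rn.
  by rewrite mulrnA He // mul0rn.
exists e; split=> // g; rewrite inE => /orP [/eqP -> //|gs Kg]; exact: He.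
Qed.

Lemma div_part0 (M : zmodType) : @div_part M 0.
Proof.
exists (fun x => x = 0); split=> //.
  by split=> // x y -> ->; rewrite subrr.
by move=> x -> n _; exists 0; rewrite mul0rn.
Qed.

Lemma div_partB (M : zmodType) (x y : M) : div_part x -> div_part y -> div_part (x - y).
Proof.
move=> [S1 [[S10 S1B] D1 S1x]] [S2 [[S20 S2B] D2 S2y]].
exists (fun z => exists a b, [/\ S1 a, S2 b & z = a + b]); split.
- split; first by exists 0, 0; rewrite addr0.
  move=> _ _ [a [b [Sa Sb ->]]] [a' [b' [Sa' Sb' ->]]].
  exists (a - a'), (b - b'); split; [exact: S1B|exact: S2B|].
  by rewrite opprD addrACA.
- move=> _ [a [b [Sa Sb ->]]] n n0.
  have [a1 [Sa1 Ea]] := D1 a Sa n n0.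
  have [b1 [Sb1 Eb]] := D2 b Sb n n0.
  by exists (a1 + b1); split; [exists a1, b1|rewrite mulrnDl Ea Eb].
- exists x, (-y); split=> //; rewrite -(sub0r y); exact: S2B.
Qed.

Lemma div_part_phi (M M' : zmodType) (phi : {additive M -> M'}) x :
  div_part x -> div_part (phi x).
Proof.
move=> [S [[S0 SB] D Sx]].
exists (fun y => exists x, S x /\ phi x = y); split.
- split; first by exists 0; rewrite raddf0.
  move=> _ _ [a [Sa <-]] [b [Sb <-]]; exists (a - b); split; [exact: SB|exact: raddfB].
- move=> _ [a [Sa <-]] n n0; have [b [Sb Eb]] := D a Sa n n0.
  by exists (phi b); split; [exists b|rewrite -raddfMn Eb].
- by exists x.
Qed.

Theorem lemma2p7 (M M' : zmodType) (phi : {additive M -> M'}) :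
  finite_set (kernel phi) ->
  coker_div_trivial phi ->
  (uniquely_divisible_in (@div_part M) \/ uniquely_divisible_in (@div_part M')) ->
  [/\ (forall x, div_part x -> div_part (phi x)),
      (forall x y, div_part x -> div_part y -> phi x = phi y -> x = y)
    & (forall y, div_part y -> exists x, div_part x /\ phi x = y)].
Proof.
move=> Hf Hc Hu.
have [e [e0 He]] := ker_exponent Hf.
split.
- exact: div_part_phi.
- move=> x y Dx Dy Exy; apply/eqP; rewrite -subr_eq0; apply/eqP.
  have Dz := div_partB Dx Dy.
  have Kz : kernel phi (x - y) by rewrite /kernel raddfB Exy subrr.
  move: Dz Kz; set z := x - y => Dz Kz.
  case: Hu => [[_ U]|[_ U]].
    by apply: (U z 0 e Dz (div_part0 M) e0); rewrite He // mul0rn.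
  have [S [[S0 SB] D Sz]] := Dz.
  have [w [Sw Ew]] := D z Sz e e0.
  have Dw : div_part w by exists S.
  have Kw : phi w = 0.
    apply: (U _ 0 e (div_part_phi phi Dw) (div_part0 M') e0).
    by rewrite -raddfMn Ew Kz mul0rn.
  by rewrite -Ew He.
-
  have Dim : forall y : M', div_part y -> Defs.image phi y.
    move=> y [S [[S0 SB] D Sy]].
    pose P := fun y : M' => exists (a : M') (b : M), S a /\ y = a + phi b.
    apply: (Hc P).
    + split; first by exists 0, 0; rewrite raddf0 addr0.
      move=> _ _ [a [b [Sa ->]]] [a' [b' [Sa' ->]]].
      exists (a - a'), (b - b'); split; first exact: SB.
      by rewrite raddfB opprD addrACA.
    + by move=> _ [b <-]; exists 0, b; rewrite add0r.
    + move=> _ [a [b [Sa ->]]] n n0.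
      have [a1 [Sa1 Ea]] := D a Sa n n0.
      exists a1; split; first by exists a1, 0; rewrite raddf0 addr0.
      by exists (- b); rewrite Ea raddfN opprD addNKr.
    + by exists y, 0; rewrite raddf0 addr0.
  pose Q := fun x : M => div_part (phi x).
  pose S := fun x : M => exists x0, Q x0 /\ x = x0 *+ e.
  have SS : is_subgroup S.
    split; first by exists 0; rewrite /Q raddf0 mul0rn; split=> //; exact: div_part0.
    move=> _ _ [a [Qa ->]] [b [Qb ->]]; exists (a - b); split.
      by rewrite /Q raddfB; exact: div_partB.
    by rewrite mulrnBl.
  have DS : divisible_in S.
    move=> _ [x [Qx ->]] n n0.
    have [T [[T0 TB] DT Tx]] := Qx.
    have [y' [Ty' Ey']] := DT _ Tx n n0.
    have Dy' : div_part y' by exists T.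
    have [x' Ex'] := Dim y' Dy'.
    exists (x' *+ e); split; first by exists x'; split=> //; rewrite /Q Ex'.
    have K : kernel phi (x' *+ n - x) by rewrite /kernel raddfB raddfMn Ex' Ey' subrr.
    by apply/eqP; rewrite -subr_eq0 -mulrnAC -mulrnBl He.
  move=> y [T [[T0 TB] DT Ty]].
  have [y0 [Ty0 Ey0]] := DT y Ty e e0.
  have Dy0 : div_part y0 by exists T.
  have [x0 Ex0] := Dim y0 Dy0.
  exists (x0 *+ e); split.
    by exists S; split=> //; exists x0; split=> //; rewrite /Q Ex0.
  by rewrite raddfMn Ex0.
Qed.
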